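(* Let $Q$ be a finite quiver without loops with vertices $1,\dots,n$, let $\mathbf d=(d_1,\dots,d_n)$ be a dimension vector, let ${\boldsymbol\lambda}=(\lambda^1,\dots,\lambda^n)$ with $\lambda^i\vdash d_i$, and let $N=(N_i)$ be nilpotent linear operators on vector spaces $V_i$ of dimension $d_i$ with Jordan types $\lambda^i$. Consider the variety of representations of $Q$ with vector space $V_i$ at each vertex $i$ that are compatible with $N$ (i.e. $N_{t(a)}f_a=f_aN_{s(a)}$ for every arrow $a$). Then there are a dense open subset of this variety and a decomposition $\mathbf d=\mathbf d_1+\dots+\mathbf d_r$ such that every representation $M$ in this dense open set can be written as $M=M_1\oplus\dots\oplus M_r$ with each $M_j$ indecomposable and $\mathbf{dim}(M_j)=\mathbf d_j$ for all $j$.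
   Context: The ground field $\Bbbk$ is algebraically closed (standing assumption of the paper). *)

(* Defs.v *)
From HB Require Import structures.
From mathcomp Require Import all_boot all_order all_algebra.
From mathcomp Require Import mpoly.
Set Implicit Arguments. Unset Strict Implicit. Unset Printing Implicit Defensive.
Import GRing.Theory.
Local Open Scope ring_scope.

(* Vector space at vertex i is the row space
   F^(d i); a linear map V_(s a) -> V_(t a) is a matrix acting on row
   vectors on the right (v |-> v *m f). *)

Section Defs.
Variables (F : fieldType) (n : nat) (A : finType) (s t : A -> 'I_n)
          (d : 'I_n -> nat).

Definition rep := forall a : A, 'M[F]_(d (s a), d (t a)).

Definition coordT : finType := {a : A & ('I_(d (s a)) * 'I_(d (t a)))%type}.

Definition rep_coord (f : rep) (c : coordT) : F :=
  f (tag c) (tagged c).1 (tagged c).2.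

Definition peval (p : {mpoly F[#|coordT|]}) (f : rep) : F :=
  p.@[fun i => rep_coord f (enum_val i)].

Definition zopen_in (X U : rep -> Prop) : Prop :=
  exists ps : seq {mpoly F[#|coordT|]},
    forall f, U f <-> (X f /\ has (fun p => peval p f != 0) ps).

(* U is Zariski-dense in X : every polynomial vanishing on U vanishes on X
   (valid as a density criterion since X below is Zariski-closed) *)
Definition zdense_in (X U : rep -> Prop) : Prop :=
  (forall f, U f -> X f) /\
  forall p, (forall f, U f -> peval p f = 0) -> forall f, X f -> peval p f = 0.

(* representations compatible with N: N_(t a) f_a = f_a N_(s a) as maps *)
Definition compatible (N : forall i, 'M[F]_(d i)) (f : rep) : Prop :=
  forall a, f a *m N (t a) = N (s a) *m f a.

Definition subrep (N : forall i, 'M[F]_(d i)) (f : rep)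
  (W : forall i, 'M[F]_(d i)) : Prop :=
  (forall i, (W i *m N i <= W i)%MS) /\
  (forall a, (W (s a) *m f a <= W (t a))%MS).

Definition zero_sub (W : forall i, 'M[F]_(d i)) : Prop :=
  forall i, W i = 0.

Definition dsum2 (W U1 U2 : forall i, 'M[F]_(d i)) : Prop :=
  forall i, mxdirect (U1 i + U2 i) /\ (U1 i + U2 i == W i)%MS.

Definition indecomposable (N : forall i, 'M[F]_(d i)) (f : rep)
  (W : forall i, 'M[F]_(d i)) : Prop :=
  subrep N f W /\ ~ zero_sub W /\
  forall U1 U2, subrep N f U1 -> subrep N f U2 -> dsum2 W U1 U2 ->
    zero_sub U1 \/ zero_sub U2.

End Defs.

(* Main.v *)
Require Import Defs.
From HB Require Import structures.
From mathcomp Require Import all_boot all_order all_algebra.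
From mathcomp Require Import mpoly.
From mathcomp Require Import all_field zify.
From Stdlib Require Import Setoid FunctionalExtensionality ClassicalEpsilon Classical.
Import GRing.Theory.
Local Open Scope ring_scope.

Module Helpers.
Set Implicit Arguments. Unset Strict Implicit. Unset Printing Implicit Defensive.

Section Defin.
Variable F : fieldType.
Local Notation term := (GRing.term F).
Local Notation formula := (GRing.formula F).

Definition PolyFun (g : seq F -> F) :=
  exists t : term, GRing.rterm t /\ forall e, GRing.eval e t = g e.
Definition DefP (P : seq F -> Prop) :=
  exists phi : formula, GRing.rformula phi /\ forall e, GRing.holds e phi <-> P e.

Lemma PF_ext g h : PolyFun g -> (forall e, g e = h e) -> PolyFun h.
Proof. by move=> [t [rt ht]] gh; exists t; split=> // e; rewrite ht gh. Qed.
Lemma PF_var j : PolyFun (fun e => nth 0 e j).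
Proof. by exists (GRing.Var F j). Qed.
Lemma PF_const c : PolyFun (fun _ => c).
Proof. by exists (GRing.Const c). Qed.
Lemma PF_add g h : PolyFun g -> PolyFun h -> PolyFun (fun e => g e + h e).
Proof.
move=> [t [rt ht]] [u [ru hu]]; exists (GRing.Add t u); split=> /=; first by rewrite rt ru.
by move=> e; rewrite ht hu.
Qed.
Lemma PF_mul g h : PolyFun g -> PolyFun h -> PolyFun (fun e => g e * h e).
Proof.
move=> [t [rt ht]] [u [ru hu]]; exists (GRing.Mul t u); split=> /=; first by rewrite rt ru.
by move=> e; rewrite ht hu.
Qed.
Lemma PF_opp g : PolyFun g -> PolyFun (fun e => - g e).
Proof. by move=> [t [rt ht]]; exists (GRing.Opp t); split=> // e /=; rewrite ht. Qed.
Lemma PF_sum (I : finType) (g : I -> seq F -> F) :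
  (forall i, PolyFun (g i)) -> PolyFun (fun e => \sum_i g i e).
Proof.
move=> hg; rewrite /PolyFun.
suff: forall r : seq I, PolyFun (fun e => \sum_(i <- r) g i e).
  by move/(_ (index_enum I)).
elim=> [|i r IH].
  by apply: PF_ext (PF_const 0) _ => e; rewrite big_nil.
by apply: PF_ext (PF_add (hg i) IH) _ => e; rewrite big_cons.
Qed.

Definition PolyMx p q (M : seq F -> 'M[F]_(p, q)) := forall x y, PolyFun (fun e => M e x y).

Lemma PM_ext p q (M M' : seq F -> 'M[F]_(p, q)) : PolyMx M -> (forall e, M e = M' e) -> PolyMx M'.
Proof. by move=> hM h x y; apply: PF_ext (hM x y) _ => e; rewrite h. Qed.
Lemma PM_const p q (C : 'M[F]_(p, q)) : PolyMx (fun _ => C).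
Proof. by move=> x y; apply: PF_const. Qed.
Lemma PM_add p q (M M' : seq F -> 'M[F]_(p, q)) : PolyMx M -> PolyMx M' -> PolyMx (fun e => M e + M' e).
Proof. by move=> h h' x y; apply: PF_ext (PF_add (h x y) (h' x y)) _ => e; rewrite mxE. Qed.
Lemma PM_mul p q k (M : seq F -> 'M[F]_(p, q)) (M' : seq F -> 'M[F]_(q, k)) :
  PolyMx M -> PolyMx M' -> PolyMx (fun e => M e *m M' e).
Proof.
move=> h h' x y; apply: PF_ext (PF_sum (fun z => PF_mul (h x z) (h' z y))) _ => e.
by rewrite mxE.
Qed.
Lemma PM_sum (I : finType) p q (M : I -> seq F -> 'M[F]_(p, q)) :
  (forall i, PolyMx (M i)) -> PolyMx (fun e => \sum_i M i e).
Proof.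
move=> h x y; apply: PF_ext (PF_sum (fun i => h i x y)) _ => e.
by rewrite summxE.
Qed.
Lemma PM_fun p q (g : 'I_p -> 'I_q -> seq F -> F) :
  (forall x y, PolyFun (g x y)) -> PolyMx (fun e => \matrix_(x, y) g x y e).
Proof. by move=> h x y; apply: PF_ext (h x y) _ => e; rewrite mxE. Qed.

Lemma DP_ext P Q : DefP P -> (forall e, P e <-> Q e) -> DefP Q.
Proof. move=> [f [rf hf]] h; exists f; split=> // e; rewrite hf; exact: h. Qed.
Lemma DP_eq g h : PolyFun g -> PolyFun h -> DefP (fun e => g e = h e).
Proof.
move=> [t [rt ht]] [u [ru hu]]; exists (GRing.Equal t u); split=> /=; first by rewrite rt ru.
by move=> e; rewrite ht hu.
Qed.
Lemma DP_and P Q : DefP P -> DefP Q -> DefP (fun e => P e /\ Q e).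
Proof.
move=> [f [rf hf]] [g [rg hg]]; exists (GRing.And f g); split=> /=; first by rewrite rf rg.
by move=> e; rewrite hf hg.
Qed.
Lemma DP_or P Q : DefP P -> DefP Q -> DefP (fun e => P e \/ Q e).
Proof.
move=> [f [rf hf]] [g [rg hg]]; exists (GRing.Or f g); split=> /=; first by rewrite rf rg.
by move=> e; rewrite hf hg.
Qed.
Lemma DP_imp P Q : DefP P -> DefP Q -> DefP (fun e => P e -> Q e).
Proof.
move=> [f [rf hf]] [g [rg hg]]; exists (GRing.Implies f g); split=> /=; first by rewrite rf rg.
by move=> e; rewrite hf hg.
Qed.
Lemma DP_not P : DefP P -> DefP (fun e => ~ P e).
Proof.
move=> [f [rf hf]]; exists (GRing.Not f); split=> //=.
by move=> e; rewrite hf.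
Qed.
Lemma DP_bool (b : bool) : DefP (fun _ => b).
Proof. by exists (GRing.Bool b). Qed.
Lemma DP_all_fin (I : finType) (P : I -> seq F -> Prop) :
  (forall i, DefP (P i)) -> DefP (fun e => forall i, P i e).
Proof.
move=> h.
suff: forall r : seq I, DefP (fun e => forall i, i \in r -> P i e).
  move/(_ (enum I)) => H; apply: DP_ext H _ => e; split=> H' i //.
  by apply: H'; rewrite mem_enum.
elim=> [|i r IH].
  by apply: DP_ext (DP_bool true) _ => e; split.
apply: DP_ext (DP_and (h i) IH) _ => e; split.
  by move=> [H1 H2] j; rewrite inE => /orP[/eqP->//|]; apply: H2.
by move=> H; split=> [|j jr]; apply: H; rewrite inE ?eqxx ?jr ?orbT.
Qed.
Lemma DP_ex_fin (I : finType) (P : I -> seq F -> Prop) :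
  (forall i, DefP (P i)) -> DefP (fun e => exists i, P i e).
Proof.
move=> h.
suff: forall r : seq I, DefP (fun e => exists2 i, i \in r & P i e).
  move/(_ (enum I)) => H; apply: DP_ext H _ => e; split.
    by move=> [i _ Hi]; exists i.
  by move=> [i Hi]; exists i; rewrite ?mem_enum.
elim=> [|i r IH].
  by apply: DP_ext (DP_bool false) _ => e; split=> // [[]].
apply: DP_ext (DP_or (h i) IH) _ => e; split.
  by move=> [H|[j jr H]]; [exists i; rewrite ?inE ?eqxx|exists j; rewrite // inE jr orbT].
by move=> [j]; rewrite inE => /orP[/eqP->|jr H]; [left|right; exists j].
Qed.
Lemma DP_mxeq p q (M M' : seq F -> 'M[F]_(p, q)) :
  PolyMx M -> PolyMx M' -> DefP (fun e => M e = M' e).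
Proof.
move=> h h'.
have := DP_all_fin (fun xy : 'I_p * 'I_q => DP_eq (h xy.1 xy.2) (h' xy.1 xy.2)).
move=> H; apply: DP_ext H _ => e; split.
  by move=> H; apply/matrixP=> x y; apply: (H (x, y)).
by move=> -> xy.
Qed.

Fixpoint setblock (e : seq F) (b : nat) (s : seq F) : seq F :=
  if s is x :: s' then setblock (set_nth 0 e b x) b.+1 s' else e.

Lemma nth_setblock s e b i :
  nth 0 (setblock e b s) i = if (b <= i < b + size s)%N then nth 0 s (i - b) else nth 0 e i.
Proof.
elim: s e b => [|x s IH] e b /=; first by rewrite addn0; case: ifP => //; case/andP=> /leq_ltn_trans h /h; rewrite ltnn.
rewrite IH nth_set_nth /=.
case: (ltngtP i b) => [ib|bi|->] //=.
- by rewrite addSnnS -(subnSK bi).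
- by rewrite addnS ltnS leq_addr subnn.
Qed.

Lemma DP_exblock P b k :
  DefP P -> DefP (fun e => exists s, size s = k /\ P (setblock e b s)).
Proof.
elim: k b P => [|k IH] b P hP.
  apply: DP_ext hP _ => e; split; first by move=> H; exists [::].
  by move=> [[|x s'] [hs H]].
have [f [rf hf]] := IH b.+1 P hP.
exists (GRing.Exists b f); split=> // e /=; split.
  by move=> [x /hf [s' [hs H]]]; exists (x :: s'); rewrite /= hs.
move=> [[|x s'] [hs H]] //; exists x; apply/hf; exists s'.
by case: hs.
Qed.
Lemma DP_allblock P b k :
  DefP P -> DefP (fun e => forall s, size s = k -> P (setblock e b s)).
Proof.
elim: k b P => [|k IH] b P hP.
  apply: DP_ext hP _ => e; split; first by move=> H [|//] _.
  by move=> H; apply: (H [::]).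
have [f [rf hf]] := IH b.+1 P hP.
exists (GRing.Forall b f); split=> // e /=; split.
  by move=> H [|x s'] // [hs]; have /hf := H x; apply.
by move=> H x; apply/hf=> s' hs; apply: (H (x :: s')); rewrite /= hs.
Qed.

Definition encT (T : finType) (g : T -> F) : seq F :=
  [seq g (enum_val i) | i <- enum 'I_#|T|].
Definition decT (T : finType) (b : nat) (e : seq F) : T -> F :=
  fun c => nth 0 e (b + enum_rank c).

Lemma size_encT (T : finType) (g : T -> F) : size (encT g) = #|T|.
Proof. by rewrite size_map size_enum_ord. Qed.
Lemma nth_encT (T : finType) (g : T -> F) (i : 'I_#|T|) : nth 0 (encT g) i = g (enum_val i).
Proof. by rewrite (nth_map i) ?size_enum_ord //; congr (g (enum_val _)); apply: val_inj; rewrite /= nth_enum_ord. Qed.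

Lemma decT_setblock (T : finType) b e (g : T -> F) c : decT b (setblock e b (encT g)) c = g c.
Proof.
rewrite /decT nth_setblock size_encT leq_addr ltn_add2l ltn_ord addKn.
by rewrite nth_encT enum_rankK.
Qed.

Lemma encT_surj (T : finType) (s : seq F) : size s = #|T| ->
  s = encT (fun c : T => nth 0 s (enum_rank c)).
Proof.
move=> hs; apply: (@eq_from_nth _ 0); rewrite ?size_encT // => i hi.
have hi' : (i < #|T|)%N by rewrite -hs.
by rewrite (nth_encT _ (Ordinal hi')) enum_valK.
Qed.

Definition ExB (T : finType) (b : nat) (P : seq F -> Prop) : seq F -> Prop :=
  fun e => exists g : T -> F, P (setblock e b (encT g)).
Definition AllB (T : finType) (b : nat) (P : seq F -> Prop) : seq F -> Prop :=
  fun e => forall g : T -> F, P (setblock e b (encT g)).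

Lemma DP_ExB (T : finType) b P : DefP P -> DefP (ExB T b P).
Proof.
move=> /(DP_exblock b #|T|) H; apply: DP_ext H _ => e; split.
  by move=> [s [hs H]]; exists (fun c => nth 0 s (enum_rank c)); rewrite -encT_surj.
by move=> [g H]; exists (encT g); rewrite size_encT.
Qed.
Lemma DP_AllB (T : finType) b P : DefP P -> DefP (AllB T b P).
Proof.
move=> /(DP_allblock b #|T|) H; apply: DP_ext H _ => e; split.
  by move=> H' g; apply: H'; rewrite size_encT.
by move=> H' s hs; rewrite (encT_surj hs); apply: H'.
Qed.

Definition Below (X : Type) (b : nat) (R : seq F -> X) :=
  forall e e', (forall i, (i < b)%N -> nth 0 e i = nth 0 e' i) -> R e = R e'.

Lemma Below_setblock X b (R : seq F -> X) b' e s : Below b R -> (b <= b')%N ->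
  R (setblock e b' s) = R e.
Proof.
move=> hR hb; apply: hR => i hi; rewrite nth_setblock ifN //.
by rewrite negb_and -ltnNge (leq_trans hi hb).
Qed.
Lemma Below_mono X b b' (R : seq F -> X) : Below b R -> (b <= b')%N -> Below b' R.
Proof. by move=> h hb e e' H; apply: h => i hi; apply: H; apply: leq_trans hb. Qed.
Lemma Below_decT (T : finType) b : Below (b + #|T|) (@decT T b).
Proof.
move=> e e' H; apply: functional_extensionality => c.
by apply: H; rewrite ltn_add2l ltn_ord.
Qed.
End Defin.


Section QE.
Variable F : closedFieldType.
Local Notation term := (GRing.term F).

Definition dnf_holds (e : seq F) (bcs : seq (seq term * seq term)) :=
  has (fun bc => all (fun t => GRing.eval e t == 0) bc.1 &&
                 all (fun t => GRing.eval e t != 0) bc.2) bcs.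

Lemma dnf_to_formE e bcs :
  GRing.qf_eval e (GRing.dnf_to_form bcs) = dnf_holds e bcs.
Proof.
elim: bcs => [|bc bcs IH] //=; rewrite IH; congr (_ || _).
case: bc => l1 l2 /=; congr (_ && _).
  by elim: l1 => //= t l ->.
by elim: l2 => //= t l ->.
Qed.

Lemma DefP_dnf (P : seq F -> Prop) : DefP P ->
  exists bcs : seq (seq term * seq term),
    all GRing.dnf_rterm bcs /\ forall e, P e <-> dnf_holds e bcs.
Proof.
move=> [phi [rphi hphi]].
have ax := @solve_monicpoly F.
pose psi := GRing.quantifier_elim (@ClosedFieldQE.ex_elim F) phi.
have wpsi : GRing.qf_form psi && GRing.rformula psi.
  by have := GRing.quantifier_elim_wf (@ClosedFieldQE.wf_ex_elim F) rphi.
exists (GRing.qf_to_dnf psi false); split.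
  by apply: GRing.qf_to_dnf_rterm; case/andP: wpsi.
move=> e; rewrite -dnf_to_formE GRing.qf_to_dnfP // -hphi.
split.
  by move/(GRing.quantifier_elim_rformP (@ClosedFieldQE.wf_ex_elim F) (ClosedFieldQE.holds_ex_elim ax) e rphi).
by move/(GRing.quantifier_elim_rformP (@ClosedFieldQE.wf_ex_elim F) (ClosedFieldQE.holds_ex_elim ax) e rphi).
Qed.
End QE.

Section Poly.
Variables (F : closedFieldType) (n : nat) (A : finType) (s t : A -> 'I_n) (d : 'I_n -> nat).
Variable N : forall i : 'I_n, 'M[F]_(d i).
Local Notation term := (GRing.term F).
Local Notation m := #|coordT s t d|.
Local Notation rep := (rep F s t d).

Definition env (f : rep) : seq F := encT (rep_coord f).

Fixpoint mp (u : term) : {mpoly F[m]} :=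
  match u with
  | GRing.Var j => if insub j is Some i then 'X_i else 0
  | GRing.Const c => c%:MP
  | GRing.NatConst k => k%:R
  | GRing.Add u1 u2 => mp u1 + mp u2
  | GRing.Opp u1 => - mp u1
  | GRing.NatMul u1 k => mp u1 *+ k
  | GRing.Mul u1 u2 => mp u1 * mp u2
  | GRing.Inv _ => 0
  | GRing.Exp u1 k => mp u1 ^+ k
  end.

Lemma mpE (u : term) (f : rep) : GRing.rterm u -> peval (mp u) f = GRing.eval (env f) u.
Proof.
rewrite /peval; elim: u => //=.
- move=> j _; case: insubP => [i hj <-|hj]; first by rewrite mevalXU /env nth_encT.
  by rewrite meval0 nth_default // size_encT leqNgt.
- by move=> c _; rewrite mevalC.
- by move=> k _; rewrite rmorph_nat.
- by move=> u1 IH1 u2 IH2 /andP[/IH1 <- /IH2 <-]; rewrite mevalD.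
- by move=> u1 IH1 /IH1 <-; rewrite mevalN.
- by move=> u1 IH1 k /IH1 <-; rewrite mevalMn.
- by move=> u1 IH1 u2 IH2 /andP[/IH1 <- /IH2 <-]; rewrite mevalM.
- by move=> u1 IH1 k /IH1 <-; rewrite rmorphXn.
Qed.

Definition lineR (f g : rep) (l : F) : rep := fun a => f a + l *: (g a - f a).

Lemma compatible_line (f g : rep) l : compatible N f -> compatible N g -> compatible N (lineR f g l).
Proof.
move=> hf hg a; rewrite /lineR mulmxDl mulmxDr -scalemxAl -scalemxAr mulmxBl mulmxBr.
by rewrite hf hg.
Qed.

Definition linepoly (f g : rep) (p : {mpoly F[m]}) : {poly F} :=
  mmap polyC (fun i => (rep_coord f (enum_val i))%:P +
                       (rep_coord g (enum_val i) - rep_coord f (enum_val i)) *: 'X) p.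

Lemma linepolyE (f g : rep) p l : (linepoly f g p).[l] = peval p (lineR f g l).
Proof.
rewrite /linepoly /peval mevalE /mmap.
have -> : forall P : {poly F}, P.[l] = horner_eval l P by [].
rewrite rmorph_sum; apply: eq_bigr => mm _.
rewrite rmorphM /= /horner_eval hornerC; congr (_ * _).
rewrite /mmap1 -/(horner_eval l _) rmorph_prod; apply: eq_bigr => i _.
rewrite rmorphXn /= /horner_eval hornerD hornerC hornerZ hornerX.
by rewrite /rep_coord /lineR !mxE mulrC.
Qed.

Lemma peval_mul p q (f : rep) : peval (p * q) f = peval p f * peval q f.
Proof. by rewrite /peval mevalM. Qed.

Lemma irr (p q : {mpoly F[m]}) (f g : rep) :
  compatible N f -> compatible N g -> peval p f != 0 -> peval q g != 0 ->
  exists h, compatible N h /\ peval p h != 0 /\ peval q h != 0.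
Proof.
move=> cf cg pf qg.
pose P := linepoly f g p; pose Q := linepoly f g q.
have hl0 : lineR f g 0 = f.
  by apply: functional_extensionality_dep => a; rewrite /lineR scale0r addr0.
have hl1 : lineR f g 1 = g.
  by apply: functional_extensionality_dep => a; rewrite /lineR scale1r addrC subrK.
have P0 : P != 0 by apply: contraNneq pf => hP; rewrite -hl0 -linepolyE -/P hP horner0.
have Q0 : Q != 0 by apply: contraNneq qg => hQ; rewrite -hl1 -linepolyE -/Q hQ horner0.
have R0 : P * Q != 0 by rewrite mulf_neq0.
pose S := (P * Q) * 'X - 1.
have hS : size S != 1%N.
  have hs : (0 < size (P * Q)%R)%N by rewrite lt0n size_poly_eq0.
  rewrite /S size_polyDl size_mulX // ?size_polyN ?size_poly1 //.
  by rewrite eqSS -lt0n.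
have [l] := closed_rootP S hS.
rewrite /root /S hornerD hornerN hornerMX hornerC subr_eq0 => /eqP hl.
have : (P * Q).[l] != 0 by apply: contra_eq_neq hl => ->; rewrite mul0r eq_sym oner_eq0.
rewrite hornerM mulf_eq0 negb_or => /andP[hP hQ].
exists (lineR f g l); split; first exact: compatible_line.
by rewrite -!linepolyE.
Qed.

Definition rep0 : rep := fun a => 0.
Lemma compatible0 : compatible N rep0.
Proof. by move=> a; rewrite /rep0 mul0mx mulmx0. Qed.

Lemma irr_prod (ps : seq {mpoly F[m]}) :
  (forall p, p \in ps -> exists f, compatible N f /\ peval p f != 0) ->
  exists f, compatible N f /\ peval (\prod_(p <- ps) p) f != 0.
Proof.
elim: ps => [|p ps IH] H.
  by exists rep0; split; [exact: compatible0|rewrite big_nil /peval meval1 oner_eq0].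
have [f [cf hf]] := H p (mem_head _ _).
have [g [cg hg]] := IH (fun q hq => H q (mem_behead (hq : q \in behead (p :: ps)))).
have [h [ch [h1 h2]]] := irr cf cg hf hg.
by exists h; split => //; rewrite big_cons peval_mul mulf_neq0.
Qed.

Lemma peval_prod (I : Type) (r : seq I) (P : I -> {mpoly F[m]}) (f : rep) :
  peval (\prod_(i <- r) P i) f = \prod_(i <- r) peval (P i) f.
Proof. by rewrite /peval rmorph_prod. Qed.

Definition cls_holds (f : rep) (cls : seq (seq {mpoly F[m]} * seq {mpoly F[m]})) :=
  has (fun c => all (fun p => peval p f == 0) c.1 && all (fun p => peval p f != 0) c.2) cls.

Lemma DefP_polys (P : seq F -> Prop) : DefP P ->
  exists cls, forall f, P (env f) <-> cls_holds f cls.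
Proof.
move=> /DefP_dnf [bcs [rb hb]].
exists [seq (map mp bc.1, map mp bc.2) | bc <- bcs] => f; rewrite hb.
suff -> : dnf_holds (env f) bcs = cls_holds f [seq (map mp bc.1, map mp bc.2) | bc <- bcs] by [].
elim: bcs rb {hb} => [|bc bcs IH] //= /andP [/andP [r1 r2] rb]; rewrite IH //; congr (_ || _).
congr (_ && _).
  by elim: bc.1 r1 => [|u l IHl] //= /andP [ru rl]; rewrite IHl // mpE.
by elim: bc.2 r2 => [|u l IHl] //= /andP [ru rl]; rewrite IHl // mpE.
Qed.

Lemma generic (L : finType) (Q : L -> seq F -> Prop) :
  (forall l, DefP (Q l)) ->
  (forall f, compatible N f -> exists l, Q l (env f)) ->
  exists l (q : {mpoly F[m]}), (exists f, compatible N f /\ peval q f != 0) /\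
     forall f, compatible N f -> peval q f != 0 -> Q l (env f).
Proof.
move=> hD cover.
have H l := DefP_polys (hD l).
pose cls l := proj1_sig (constructive_indefinite_description _ (H l)).
have hb l : forall f, Q l (env f) <-> cls_holds f (cls l).
  exact: (proj2_sig (constructive_indefinite_description _ (H l))).
pose allT := flatten [seq flatten [seq c.1 | c <- cls l] | l <- enum L].
pose nz (p : {mpoly F[m]}) : bool :=
  if excluded_middle_informative (exists f, compatible N f /\ peval p f != 0)
  then true else false.
pose S := [seq p <- allT | nz p].
have [f0 [cf0 hf0]] : exists f, compatible N f /\ peval (\prod_(p <- S) p) f != 0.
  apply: irr_prod => p; rewrite mem_filter => /andP [nzu _].
  by move: nzu; rewrite /nz; case: excluded_middle_informative.
have [l Ql] := cover f0 cf0.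
have /hasP [c cin /andP [h1 h2]] := (proj1 (hb l _) Ql).
have z1 : forall p, p \in c.1 -> forall f, compatible N f -> peval p f = 0.
  move=> p hu f cf; apply/eqP; apply: contraT => hneq.
  have nzu : nz p by rewrite /nz; case: excluded_middle_informative => // [[]]; exists f.
  have uT : p \in allT.
    apply/flattenP; exists (flatten [seq c.1 | c <- cls l]).
      by apply: map_f; rewrite mem_enum.
    by apply/flattenP; exists c.1 => //; apply: map_f.
  have uS : p \in S by rewrite mem_filter nzu.
  move: hf0; rewrite (big_rem _ uS) peval_mul.
  by rewrite (eqP (allP h1 p hu)) mul0r eqxx.
exists l, (\prod_(p <- c.2) p); split.
  exists f0; split => //; rewrite peval_prod prodf_seq_neq0.
  by apply/allP => u hu /=; exact: (allP h2).
move=> f cf; rewrite peval_prod prodf_seq_neq0 => /allP hq.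
apply/(hb l f); apply/hasP; exists c => //; apply/andP; split.
  by apply/allP => u hu; rewrite z1.
by apply/allP => u hu; have := hq u hu.
Qed.

Lemma final_open (L : finType) (Q : L -> seq F -> Prop) :
  (forall l, DefP (Q l)) ->
  (forall f, compatible N f -> exists l, Q l (env f)) ->
  exists l (U : rep -> Prop), zopen_in (compatible N) U /\ zdense_in (compatible N) U /\
     (exists f, U f) /\ forall f, U f -> Q l (env f).
Proof.
move=> hD cover; have [l [q [[f0 [cf0 hf0]] hQ]]] := generic hD cover.
exists l, (fun f => compatible N f /\ has (fun p => peval p f != 0) [:: q]).
split; first by exists [:: q].
split; last first.
  split; first by exists f0; rewrite /= hf0.
  by move=> f [cf]; rewrite /= orbF; apply: hQ.
split; first by move=> f [].
move=> p hp f cf; apply/eqP; apply: contraT => hpf.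
have [h [ch [h1 h2]]] := irr cf cf0 hpf hf0.
by move: h1; rewrite hp ?eqxx //= h2.
Qed.
End Poly.


Section Decomp.
Variables (F : fieldType) (n : nat) (A : finType) (s t : A -> 'I_n) (d : 'I_n -> nat).
Variable N : forall i : 'I_n, 'M[F]_(d i).
Local Notation rep := (rep F s t d).
Local Notation fam := (forall i : 'I_n, 'M[F]_(d i)).

Definition decomp (f : rep) (W : fam) r (V : 'I_r -> fam) :=
  (forall j, indecomposable N f (V j)) /\
  forall i, mxdirect (\sum_j V j i) /\ (\sum_j V j i == W i)%MS.

Definition trank (W : fam) := (\sum_i \rank (W i))%N.

Lemma dsum2_rank (W U1 U2 : fam) i : dsum2 W U1 U2 ->
  (\rank (U1 i) + \rank (U2 i))%N = \rank (W i).
Proof.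
move=> /(_ i) [/mxdirect_addsP hd /eqmx_rank <-].
by rewrite -mxrank_sum_cap hd mxrank0 addn0.
Qed.

Lemma zero_sub_trank (W : fam) : ~ zero_sub W -> (0 < trank W)%N.
Proof.
move=> hW; rewrite lt0n; apply/negP => /eqP h; apply: hW => i.
apply/eqP; rewrite -mxrank_eq0; apply/eqP.
by move: h; rewrite /trank => /eqP; rewrite sum_nat_eq0 => /forallP /(_ i) /eqP.
Qed.

Definition catf r1 r2 (V1 : 'I_r1 -> fam) (V2 : 'I_r2 -> fam) (j : 'I_(r1 + r2)) : fam :=
  match split j with inl a => V1 a | inr b => V2 b end.

Lemma sum_catf r1 r2 (V1 : 'I_r1 -> fam) (V2 : 'I_r2 -> fam) (G : fam -> nat) :
  (\sum_j G (catf V1 V2 j) = \sum_j G (V1 j) + \sum_j G (V2 j))%N.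
Proof.
rewrite big_split_ord /=; congr (_ + _)%N; apply: eq_bigr => j _; rewrite /catf.
  by rewrite -/(unsplit (inl j)) unsplitK.
by rewrite -/(unsplit (inr j)) unsplitK.
Qed.
Lemma sum_catfM r1 r2 (V1 : 'I_r1 -> fam) (V2 : 'I_r2 -> fam) i :
  (\sum_j catf V1 V2 j i)%MS = (\sum_j V1 j i + \sum_j V2 j i)%MS.
Proof.
rewrite big_split_ord /=; congr (_ + _)%MS; apply: eq_bigr => j _; rewrite /catf.
  by rewrite -/(unsplit (inl j)) unsplitK.
by rewrite -/(unsplit (inr j)) unsplitK.
Qed.

Lemma decomp_cat f (W U1 U2 : fam) r1 r2 V1 V2 :
  dsum2 W U1 U2 -> decomp f U1 V1 -> decomp f U2 V2 -> @decomp f W (r1 + r2) (catf V1 V2).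
Proof.
move=> hW [i1 h1] [i2 h2]; split.
  by move=> j; rewrite /catf; case: split.
move=> i; have [hd1 he1] := h1 i; have [hd2 he2] := h2 i.
have he : (\sum_j catf V1 V2 j i :=: W i)%MS.
  rewrite sum_catfM; apply: eqmx_trans (adds_eqmx (eqmxP he1) (eqmxP he2)) _.
  by apply/eqmxP; case: (hW i).
split; last by apply/eqmxP.
rewrite mxdirectE /= (sum_catf V1 V2 (fun V => \rank (V i))).
rewrite he -(dsum2_rank i hW) -(eqmx_rank he1) -(eqmx_rank he2).
by move: hd1 hd2; rewrite !mxdirectE /= => /eqP <- /eqP <-.
Qed.

Lemma exists_decomp (f : rep) k : forall W : fam, subrep N f W -> (trank W <= k)%N ->
  exists r (V : 'I_r -> fam), decomp f W V.
Proof.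
elim: k => [|k IH] W hW hk.
  have hz : zero_sub W.
    by apply: NNPP => /zero_sub_trank; rewrite ltnNge hk.
  exists 0%N, (fun _ _ => 0); split; first by case.
  move=> i; split; first by rewrite mxdirectE /= !big_ord0 mxrank0.
  by rewrite big_ord0 hz submx_refl.
case: (classic (indecomposable N f W)) => hind.
  exists 1%N, (fun _ => W); split => // i; split.
    by rewrite mxdirectE /= !big_ord1.
  by rewrite big_ord1 submx_refl.
case: (classic (zero_sub W)) => hz.
  exists 0%N, (fun _ _ => 0); split; first by case.
  move=> i; split; first by rewrite mxdirectE /= !big_ord0 mxrank0.
  by rewrite big_ord0 hz submx_refl.
have [U1 [U2 [s1 [s2 [hd [n1 n2]]]]]] : exists U1 U2, subrep N f U1 /\ subrep N f U2 /\
    dsum2 W U1 U2 /\ ~ zero_sub U1 /\ ~ zero_sub U2.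
  apply: NNPP => H; apply: hind; split => //; split => // U1 U2 s1 s2 hd.
  apply: NNPP => H2; apply: H; exists U1, U2; do 3!split => //.
  by split => h; apply: H2; [left|right].
have ht : trank W = (trank U1 + trank U2)%N.
  by rewrite /trank -big_split /=; apply: eq_bigr => i _; rewrite (dsum2_rank i hd).
have [r1 [V1 hV1]] : exists r (V : 'I_r -> fam), decomp f U1 V.
  apply: IH s1 _; have := zero_sub_trank n2; move: hk; rewrite ht; lia.
have [r2 [V2 hV2]] : exists r (V : 'I_r -> fam), decomp f U2 V.
  apply: IH s2 _; have := zero_sub_trank n1; move: hk; rewrite ht; lia.
by exists (r1 + r2)%N, (catf V1 V2); apply: decomp_cat hd hV1 hV2.
Qed.

Definition Concl r (dv : 'I_r -> 'I_n -> nat) (f : rep) :=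
  exists W : 'I_r -> fam,
    (forall j, indecomposable N f (W j)) /\
    (forall i, mxdirect (\sum_(j < r) W j i) /\ (\sum_(j < r) W j i == 1%:M)%MS) /\
    (forall j i, \rank (W j i) = dv j i).

Lemma Concl_dim r dv f : @Concl r dv f -> forall i, d i = (\sum_(j < r) dv j i)%N.
Proof.
move=> [W [_ [hs hr]]] i; have [hd he] := hs i.
rewrite -(mxrank1 F (d i)) -(eqmx_rank he); move: hd; rewrite mxdirectE /= => /eqP ->.
by apply: eq_bigr => j _; rewrite hr.
Qed.

Lemma Concl_exists (f : rep) : exists r (dv : 'I_r -> 'I_n -> nat),
  (r <= \sum_i d i)%N /\ (forall j i, dv j i <= \sum_i d i)%N /\ Concl dv f.
Proof.
have h1 : subrep N f (fun i => 1%:M) by split => *; apply: submx1.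
have [r [V [hi hs]]] : exists r (V : 'I_r -> fam), decomp f (fun i => 1%:M) V.
  apply: (@exists_decomp f (\sum_i d i) _ h1).
  by rewrite leq_eqVlt; apply/orP; left; rewrite /trank; apply/eqP; apply: eq_bigr => i _; rewrite mxrank1.
exists r, (fun j i => \rank (V j i)); split; last split; last first.
  by exists V; split => //; split.
  move=> j i; apply: leq_trans (rank_leq_col _) _.
  by rewrite (bigD1 i) //= leq_addr.
have hsum : (\sum_j trank (V j) = \sum_i d i)%N.
  rewrite /trank exchange_big /=; apply: eq_bigr => i _.
  have [hd he] := hs i.
  transitivity (\rank (\sum_j V j i)%MS); last by rewrite (eqmx_rank he) mxrank1.
  by move: hd; rewrite mxdirectE /= => /eqP ->.
rewrite -hsum -{1}(card_ord r) -sum1_card; apply: leq_sum => j _.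
have [_ [hnz _]] := hi j; exact: zero_sub_trank hnz.
Qed.
End Decomp.


Section FO.
Variables (F : fieldType) (n : nat) (A : finType) (s t : A -> 'I_n) (d : 'I_n -> nat).
Variable N : forall i : 'I_n, 'M[F]_(d i).
Local Notation rep := (rep F s t d).
Local Notation fam := (forall i : 'I_n, 'M[F]_(d i)).
Local Notation m := #|coordT s t d|.

Definition Tfam : finType := {i : 'I_n & ('I_(d i) * 'I_(d i))%type}.

Definition famOf (g : Tfam -> F) : fam :=
  fun i => \matrix_(x, y) g (@existT _ (fun i => ('I_(d i) * 'I_(d i))%type) i (x, y)).
Definition repOf (g : coordT s t d -> F) : rep :=
  fun a => \matrix_(x, y) g (@existT _ (fun a => ('I_(d (s a)) * 'I_(d (t a)))%type) a (x, y)).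
Definition WOf r (g : 'I_r * Tfam -> F) : 'I_r -> fam :=
  fun j i => \matrix_(x, y) g (j, @existT _ (fun i => ('I_(d i) * 'I_(d i))%type) i (x, y)).
Definition mxOf p q (g : 'I_p * 'I_q -> F) : 'M[F]_(p, q) := \matrix_(x, y) g (x, y).
Definition mxsOf r p q (g : 'I_r * ('I_p * 'I_q) -> F) : 'I_r -> 'M[F]_(p, q) :=
  fun j => \matrix_(x, y) g (j, (x, y)).

Lemma famOf_surj (W : fam) : famOf (fun c => W (tag c) (tagged c).1 (tagged c).2) = W.
Proof. by apply: functional_extensionality_dep => i; apply/matrixP => x y; rewrite mxE. Qed.
Lemma repOf_coord (f : rep) : repOf (rep_coord f) = f.
Proof. by apply: functional_extensionality_dep => a; apply/matrixP => x y; rewrite mxE. Qed.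
Lemma WOf_surj r (W : 'I_r -> fam) :
  WOf (fun c => W c.1 (tag c.2) (tagged c.2).1 (tagged c.2).2) = W.
Proof.
apply: functional_extensionality => j; apply: functional_extensionality_dep => i.
by apply/matrixP => x y; rewrite mxE.
Qed.
Lemma mxOf_surj p q (M : 'M[F]_(p, q)) : mxOf (fun c => M c.1 c.2) = M.
Proof. by apply/matrixP => x y; rewrite mxE. Qed.
Lemma mxsOf_surj r p q (M : 'I_r -> 'M[F]_(p, q)) : mxsOf (fun c => M c.1 c.2.1 c.2.2) = M.
Proof. by apply: functional_extensionality => j; apply/matrixP => x y; rewrite mxE. Qed.

Lemma decT_setblockE (T : finType) b e (g : T -> F) : decT b (setblock e b (encT g)) = g.
Proof. by apply: functional_extensionality => c; rewrite decT_setblock. Qed.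
Lemma decT_encT (T : finType) (g : T -> F) : decT 0 (encT g) = g.
Proof.
apply: functional_extensionality => c.
by rewrite /decT add0n nth_encT enum_rankK.
Qed.

Lemma PF_decT (T : finType) b (h : T -> T) c : PolyFun (fun e : seq F => decT b e (h c)).
Proof. exact: PF_var. Qed.
Lemma PM_famOf (T : finType) b (h : Tfam -> T) i :
  PolyMx (fun e : seq F => famOf (fun c => decT b e (h c)) i).
Proof. by apply: PM_fun => x y; apply: PF_var. Qed.
Lemma PM_repOf b : forall a, PolyMx (fun e : seq F => repOf (decT b e) a).
Proof. by move=> a; apply: PM_fun => x y; apply: PF_var. Qed.
Lemma PM_WOf r b j i : PolyMx (fun e : seq F => WOf (decT (T := ('I_r * Tfam)%type) b e) j i).
Proof. by apply: PM_fun => x y; apply: PF_var. Qed.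
Lemma PM_mxOf (T : finType) p q b (h : 'I_p * 'I_q -> T) :
  PolyMx (fun e : seq F => mxOf (fun c => decT b e (h c))).
Proof. by apply: PM_fun => x y; apply: PF_var. Qed.
Lemma PM_mxsOf (T : finType) r p q b (h : 'I_r * ('I_p * 'I_q) -> T) j :
  PolyMx (fun e : seq F => mxsOf (fun c => decT b e (h c)) j).
Proof. by apply: PM_fun => x y; apply: PF_var. Qed.

Lemma Below_comp (X Y : Type) b (R : seq F -> X) (G : X -> Y) :
  Below b R -> Below b (fun e : seq F => G (R e)).
Proof. by move=> h e e' H; rewrite (h e e' H). Qed.

Lemma PM_mxOf' p q b : PolyMx (fun e : seq F => mxOf (decT (T := ('I_p * 'I_q)%type) b e)).
Proof. by apply: PM_fun => x y; apply: PF_var. Qed.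

Definition Tmxd k : finType := (('I_1 * 'I_k) + ('I_1 * 'I_k))%type.
Definition Tadd k : finType := (('I_k * 'I_k) + ('I_k * 'I_k))%type.
Definition TW r : finType := ('I_r * Tfam)%type.
Definition Tff : finType := (Tfam + Tfam)%type.
Definition Trk k rk : finType :=
  ((('I_rk * 'I_k) + ('I_k * 'I_rk)) + (('I_rk * 'I_k) + ('I_k * 'I_rk)))%type.

Definition subFO p q k b (X : seq F -> 'M[F]_(p, k)) (Y : seq F -> 'M[F]_(q, k)) :=
  ExB ('I_p * 'I_q)%type b (fun e => X e = mxOf (decT b e) *m Y e).

Definition mxd2FO k b (X Y : seq F -> 'M[F]_k) :=
  AllB (Tmxd k) b (fun e =>
    mxOf (fun c => decT (T := Tmxd k) b e (inl c)) *m X e = mxOf (fun c => decT (T := Tmxd k) b e (inr c)) *m Y e ->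
    mxOf (fun c => decT (T := Tmxd k) b e (inl c)) *m X e = 0).

Definition addFO k b (W U1 U2 : seq F -> 'M[F]_k) :=
  ExB (Tadd k) b (fun e =>
    W e = mxOf (fun c => decT (T := Tadd k) b e (inl c)) *m U1 e + mxOf (fun c => decT (T := Tadd k) b e (inr c)) *m U2 e).

Definition subrepFO b (fR : seq F -> rep) (WR : seq F -> fam) (e : seq F) :=
  (forall i, subFO b (fun e => WR e i *m N i) (fun e => WR e i) e) /\
  (forall a, subFO b (fun e => WR e (s a) *m fR e a) (fun e => WR e (t a)) e).

Definition zeroFO (WR : seq F -> fam) (e : seq F) := forall i, WR e i = 0.

Definition dsum2FO b (WR U1R U2R : seq F -> fam) (e : seq F) :=
  forall i, mxd2FO b (fun e => U1R e i) (fun e => U2R e i) e /\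
    subFO b (fun e => U1R e i) (fun e => WR e i) e /\
    subFO b (fun e => U2R e i) (fun e => WR e i) e /\
    addFO b (fun e => WR e i) (fun e => U1R e i) (fun e => U2R e i) e.

Definition indecFO b (fR : seq F -> rep) (WR : seq F -> fam) (e : seq F) :=
  subrepFO b fR WR e /\ ~ zeroFO WR e /\
  AllB Tff b (fun e =>
    subrepFO (b + #|Tff|) fR (fun e => famOf (fun c => decT (T := Tff) b e (inl c))) e ->
    subrepFO (b + #|Tff|) fR (fun e => famOf (fun c => decT (T := Tff) b e (inr c))) e ->
    dsum2FO (b + #|Tff|) WR (fun e => famOf (fun c => decT (T := Tff) b e (inl c)))
         (fun e => famOf (fun c => decT (T := Tff) b e (inr c))) e ->
    zeroFO (fun e => famOf (fun c => decT (T := Tff) b e (inl c))) e \/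
    zeroFO (fun e => famOf (fun c => decT (T := Tff) b e (inr c))) e) e.

Definition sumFO r b (WR : seq F -> 'I_r -> fam) i :=
  ExB ('I_r * ('I_(d i) * 'I_(d i)))%type b (fun e =>
    1%:M = \sum_j mxsOf (decT b e) j *m WR e j i).

Definition rankFO k b (X : seq F -> 'M[F]_k) rk :=
  ExB (Trk k rk) b (fun e =>
    mxOf (fun c => decT (T := Trk k rk) b e (inl (inl c))) *m mxOf (fun c => decT (T := Trk k rk) b e (inl (inr c))) = 1%:M /\
    mxOf (fun c => decT (T := Trk k rk) b e (inl (inl c))) = mxOf (fun c => decT (T := Trk k rk) b e (inr (inl c))) *m X e /\
    X e = mxOf (fun c => decT (T := Trk k rk) b e (inr (inr c))) *m mxOf (fun c => decT (T := Trk k rk) b e (inl (inl c)))).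

Definition QFO r (dv : 'I_r -> 'I_n -> nat) :=
  ExB (TW r) m (fun e =>
   (forall j, indecFO (m + #|TW r|) (fun e => repOf (decT 0 e))
                 (fun e => WOf (decT (T := TW r) m e) j) e) /\
   (forall i, (\sum_j dv j i)%N = d i /\
       sumFO (m + #|TW r|) (fun e => WOf (decT (T := TW r) m e)) i e) /\
   (forall j i, rankFO (m + #|TW r|) (fun e => WOf (decT (T := TW r) m e) j i) (dv j i) e)).

Definition PolyFam (WR : seq F -> fam) := forall i, PolyMx (fun e => WR e i).
Definition PolyRep (fR : seq F -> rep) := forall a, PolyMx (fun e => fR e a).

Lemma subFO_DP p q k b (X : seq F -> 'M[F]_(p, k)) (Y : seq F -> 'M[F]_(q, k)) :
  PolyMx X -> PolyMx Y -> DefP (subFO b X Y).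
Proof.
by move=> hX hY; apply: DP_ExB; apply: DP_mxeq => //; apply: PM_mul => //; apply: PM_mxOf'.
Qed.
Lemma mxd2FO_DP k b (X Y : seq F -> 'M[F]_k) : PolyMx X -> PolyMx Y -> DefP (mxd2FO b X Y).
Proof.
move=> hX hY; apply: DP_AllB; apply: DP_imp; apply: DP_mxeq; try apply: PM_mul => //;
  try apply: PM_mxOf; exact: PM_const.
Qed.
Lemma addFO_DP k b (W U1 U2 : seq F -> 'M[F]_k) :
  PolyMx W -> PolyMx U1 -> PolyMx U2 -> DefP (addFO b W U1 U2).
Proof.
move=> hW h1 h2; apply: DP_ExB; apply: DP_mxeq => //.
by apply: PM_add; apply: PM_mul => //; apply: PM_mxOf.
Qed.
Lemma subrepFO_DP b fR WR : PolyRep fR -> PolyFam WR -> DefP (subrepFO b fR WR).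
Proof.
move=> hf hW; apply: DP_and; apply: DP_all_fin => i; apply: subFO_DP => //;
  apply: PM_mul => //; exact: PM_const.
Qed.
Lemma zeroFO_DP WR : PolyFam WR -> DefP (zeroFO WR).
Proof. by move=> hW; apply: DP_all_fin => i; apply: DP_mxeq => //; apply: PM_const. Qed.
Lemma dsum2FO_DP b WR U1R U2R : PolyFam WR -> PolyFam U1R -> PolyFam U2R ->
  DefP (dsum2FO b WR U1R U2R).
Proof.
move=> hW h1 h2; apply: DP_all_fin => i.
apply: DP_and; first exact: mxd2FO_DP.
apply: DP_and; first exact: subFO_DP.
apply: DP_and; first exact: subFO_DP.
exact: addFO_DP.
Qed.
Lemma indecFO_DP b fR WR : PolyRep fR -> PolyFam WR -> DefP (indecFO b fR WR).
Proof.
move=> hf hW; apply: DP_and; first exact: subrepFO_DP.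
apply: DP_and; first by apply: DP_not; apply: zeroFO_DP.
have h1 : PolyFam (fun e => famOf (fun c => decT (T := Tff) b e (inl c))) by move=> i; apply: PM_famOf.
have h2 : PolyFam (fun e => famOf (fun c => decT (T := Tff) b e (inr c))) by move=> i; apply: PM_famOf.
apply: DP_AllB; apply: DP_imp; first exact: subrepFO_DP.
apply: DP_imp; first exact: subrepFO_DP.
apply: DP_imp; first exact: dsum2FO_DP.
by apply: DP_or; apply: zeroFO_DP.
Qed.
Lemma sumFO_DP r b (WR : seq F -> 'I_r -> fam) i :
  (forall j, PolyFam (fun e => WR e j)) -> DefP (sumFO b WR i).
Proof.
move=> hW; apply: DP_ExB; apply: DP_mxeq; first exact: PM_const.
apply: PM_sum => j; apply: PM_mul; last exact: hW.
by apply: PM_fun => x y; apply: PF_var.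
Qed.
Lemma rankFO_DP k b (X : seq F -> 'M[F]_k) rk : PolyMx X -> DefP (rankFO b X rk).
Proof.
move=> hX; apply: DP_ExB.
apply: DP_and; first by apply: DP_mxeq; [apply: PM_mul; apply: PM_mxOf|apply: PM_const].
apply: DP_and; apply: DP_mxeq; try apply: PM_mul; try apply: PM_mxOf; exact: hX.
Qed.
Lemma QFO_DP r dv : DefP (@QFO r dv).
Proof.
apply: DP_ExB.
have hf : PolyRep (fun e => repOf (decT 0 e)) by move=> a; apply: PM_repOf.
apply: DP_and.
  by apply: DP_all_fin => j; apply: indecFO_DP => // i; apply: PM_WOf.
apply: DP_and.
  apply: DP_all_fin => i; apply: DP_and.
    by apply: (DP_ext (DP_bool F ((\sum_j dv j i)%N == d i))) => e; split => /eqP.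
  by apply: sumFO_DP => j i'; apply: PM_WOf.
by apply: DP_all_fin => j; apply: DP_all_fin => i; apply: rankFO_DP; apply: PM_WOf.
Qed.

Lemma BS (X : Type) b (R : seq F -> X) b' (hR : Below b R) (hb : (b <= b')%N) e s0 :
  R (setblock e b' s0) = R e.
Proof. exact: (Below_setblock e s0 hR hb). Qed.

Lemma subFO_iff p q k b (X : seq F -> 'M[F]_(p, k)) (Y : seq F -> 'M[F]_(q, k)) e :
  Below b X -> Below b Y -> subFO b X Y e <-> (X e <= Y e)%MS.
Proof.
move=> hX hY; rewrite /subFO /ExB; split.
  by move=> [g]; rewrite decT_setblockE (BS hX (leqnn b)) (BS hY (leqnn b)) => ->; apply: submxMl.
move/submxP => [D hD]; exists (fun c => D c.1 c.2).
by rewrite decT_setblockE (BS hX (leqnn b)) (BS hY (leqnn b)) mxOf_surj.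
Qed.

Lemma mxd2FO_iff k b (X Y : seq F -> 'M[F]_k) e :
  Below b X -> Below b Y -> mxd2FO b X Y e <-> mxdirect (X e + Y e).
Proof.
move=> hX hY; rewrite /mxd2FO /AllB; split.
  move=> H; apply/mxdirect_addsP; apply/eqP; rewrite -submx0; apply/rV_subP => w.
  rewrite sub_capmx => /andP [/submxP [u hu] /submxP [v hv]].
  have := H (fun c => match c with inl c => u c.1 c.2 | inr c => v c.1 c.2 end).
  rewrite decT_setblockE (BS hX (leqnn b)) (BS hY (leqnn b)) /= !mxOf_surj.
  by rewrite -hu -hv => /(_ erefl) ->; rewrite sub0mx.
move/mxdirect_addsP => hcap g.
rewrite decT_setblockE (BS hX (leqnn b)) (BS hY (leqnn b)).
move=> huv; apply/eqP; rewrite -submx0 -hcap sub_capmx submxMl /=.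
by rewrite huv submxMl.
Qed.

Lemma addFO_iff k b (W U1 U2 : seq F -> 'M[F]_k) e :
  Below b W -> Below b U1 -> Below b U2 -> addFO b W U1 U2 e <-> (W e <= U1 e + U2 e)%MS.
Proof.
move=> hW h1 h2; rewrite /addFO /ExB; split.
  move=> [g]; rewrite decT_setblockE (BS hW (leqnn b)) (BS h1 (leqnn b)) (BS h2 (leqnn b)).
  by move=> hg; apply/sub_addsmxP; exists (mxOf (fun c : 'I_k * 'I_k => g (inl c)), mxOf (fun c : 'I_k * 'I_k => g (inr c))).
move/sub_addsmxP => [[u v] /= huv].
exists (fun c => match c with inl c => u c.1 c.2 | inr c => v c.1 c.2 end).
rewrite decT_setblockE (BS hW (leqnn b)) (BS h1 (leqnn b)) (BS h2 (leqnn b)) /=.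
by rewrite !mxOf_surj.
Qed.

Lemma subrepFO_iff b fR WR e : Below b fR -> Below b WR ->
  subrepFO b fR WR e <-> subrep N (fR e) (WR e).
Proof.
move=> hf hW; rewrite /subrepFO /subrep; split.
  move=> [H1 H2]; split => [i|a].
    by apply/(subFO_iff _ (Below_comp (fun W => W i *m N i) hW) (Below_comp (fun W => W i) hW)).
  have hX : Below b (fun e => WR e (s a) *m fR e a).
    by move=> e1 e2 H; rewrite (hW e1 e2 H) (hf e1 e2 H).
  exact/(subFO_iff _ hX (Below_comp (fun W => W (t a)) hW)).
move=> [H1 H2]; split => [i|a].
  by apply/(subFO_iff _ (Below_comp (fun W => W i *m N i) hW) (Below_comp (fun W => W i) hW)).
have hX : Below b (fun e => WR e (s a) *m fR e a).
  by move=> e1 e2 H; rewrite (hW e1 e2 H) (hf e1 e2 H).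
exact/(subFO_iff _ hX (Below_comp (fun W => W (t a)) hW)).
Qed.

Lemma dsum2FO_iff b WR U1R U2R e : Below b WR -> Below b U1R -> Below b U2R ->
  dsum2FO b WR U1R U2R e <-> dsum2 (WR e) (U1R e) (U2R e).
Proof.
move=> hW h1 h2; rewrite /dsum2FO /dsum2.
have B i (R : seq F -> fam) : Below b R -> Below b (fun e => R e i).
  by move=> hR e1 e2 H; rewrite (hR e1 e2 H).
split.
  move=> H i; have [Hd [S1 [S2 Ha]]] := H i.
  move: Hd => /(mxd2FO_iff _ (B i _ h1) (B i _ h2)) Hd.
  move: S1 => /(subFO_iff _ (B i _ h1) (B i _ hW)) S1.
  move: S2 => /(subFO_iff _ (B i _ h2) (B i _ hW)) S2.
  move: Ha => /(addFO_iff _ (B i _ hW) (B i _ h1) (B i _ h2)) Ha.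
  split; first exact: Hd.
  by rewrite addsmx_sub S1 S2 Ha.
move=> H i; have [Hd] := H i; rewrite addsmx_sub => /andP [/andP [S1 S2] Ha].
split; first exact/(mxd2FO_iff _ (B i _ h1) (B i _ h2)).
split; first exact/(subFO_iff _ (B i _ h1) (B i _ hW)).
split; first exact/(subFO_iff _ (B i _ h2) (B i _ hW)).
exact/(addFO_iff _ (B i _ hW) (B i _ h1) (B i _ h2)).
Qed.

Lemma indecFO_iff b fR WR e : Below b fR -> Below b WR ->
  indecFO b fR WR e <-> indecomposable N (fR e) (WR e).
Proof.
move=> hf hW; rewrite /indecFO /indecomposable.
have hS := subrepFO_iff e hf hW.
have hf' : Below (b + #|Tff|) fR by apply: Below_mono hf (leq_addr _ _).
have hW' : Below (b + #|Tff|) WR by apply: Below_mono hW (leq_addr _ _).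
have hU1 : Below (b + #|Tff|) (fun e => famOf (fun c => decT (T := Tff) b e (inl c))).
  by move=> e1 e2 H; rewrite (@Below_decT F Tff b e1 e2 H).
have hU2 : Below (b + #|Tff|) (fun e => famOf (fun c => decT (T := Tff) b e (inr c))).
  by move=> e1 e2 H; rewrite (@Below_decT F Tff b e1 e2 H).
have key : forall g : Tff -> F,
  (subrepFO (b + #|Tff|) fR (fun e => famOf (fun c => decT (T := Tff) b e (inl c))) (setblock e b (encT g)) ->
    subrepFO (b + #|Tff|) fR (fun e => famOf (fun c => decT (T := Tff) b e (inr c))) (setblock e b (encT g)) ->
    dsum2FO (b + #|Tff|) WR (fun e => famOf (fun c => decT (T := Tff) b e (inl c)))
         (fun e => famOf (fun c => decT (T := Tff) b e (inr c))) (setblock e b (encT g)) ->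
    zeroFO (fun e => famOf (fun c => decT (T := Tff) b e (inl c))) (setblock e b (encT g)) \/
    zeroFO (fun e => famOf (fun c => decT (T := Tff) b e (inr c))) (setblock e b (encT g)))
  <-> (subrep N (fR e) (famOf (fun c => g (inl c))) -> subrep N (fR e) (famOf (fun c => g (inr c))) ->
       dsum2 (WR e) (famOf (fun c => g (inl c))) (famOf (fun c => g (inr c))) ->
       zero_sub (famOf (fun c => g (inl c))) \/ zero_sub (famOf (fun c => g (inr c)))).
  move=> g.
  rewrite (subrepFO_iff _ hf' hU1) (subrepFO_iff _ hf' hU2) (dsum2FO_iff _ hW' hU1 hU2).
  by rewrite /zeroFO decT_setblockE (BS hf (leqnn b)) (BS hW (leqnn b)).
split.
  move=> [Hs [Hz Hall]]; split; first exact/hS.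
  split; first exact: Hz.
  move=> U1 U2.
  have := (proj1 (key (fun c => match c with
     | inl c => U1 (tag c) (tagged c).1 (tagged c).2
     | inr c => U2 (tag c) (tagged c).1 (tagged c).2 end))) (Hall _).
  by rewrite /= !famOf_surj.
move=> [Hs [Hz H]]; split; first exact/hS.
split; first exact: Hz.
move=> g; apply/(key g) => *; exact: H.
Qed.

Lemma sumFO_iff r b (WR : seq F -> 'I_r -> fam) i e : Below b WR ->
  sumFO b WR i e <-> (1%:M <= \sum_j WR e j i)%MS.
Proof.
move=> hW; rewrite /sumFO /ExB; split.
  move=> [g]; rewrite decT_setblockE (BS hW (leqnn b)) => H.
  by apply/sub_sumsmxP; exists (mxsOf g).
move/sub_sumsmxP => [u hu]; exists (fun c => u c.1 c.2.1 c.2.2).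
by rewrite decT_setblockE (BS hW (leqnn b)) mxsOf_surj.
Qed.

Lemma rankFO_iff k b (X : seq F -> 'M[F]_k) rk e : Below b X ->
  rankFO b X rk e <-> \rank (X e) = rk.
Proof.
move=> hX; rewrite /rankFO /ExB; split.
  move=> [g]; rewrite decT_setblockE (BS hX (leqnn b)) => [[hBC [hB hX']]].
  have rf : row_free (mxOf (fun c => g (inl (inl c)))) by apply/row_freeP; eexists; exact: hBC.
  have : (mxOf (fun c => g (inl (inl c))) == X e)%MS.
    apply/andP; split; first by rewrite {1}hB submxMl.
    by rewrite {1}hX' submxMl.
  by move/eqmx_rank <-; apply/eqP.
move=> hr.
have [B [rf hBX]] : exists B : 'M[F]_(rk, k), row_free B /\ (B == X e)%MS.
  rewrite -hr; exists (row_base (X e)); split; first exact: row_base_free.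
  by apply/eqmxP; exact: eq_row_base.
have [C hC] := row_freeP rf.
case/andP: hBX => /submxP [Xm hXm] /submxP [Ym hYm].
exists (fun c => match c with
  | inl (inl c) => B c.1 c.2 | inl (inr c) => C c.1 c.2
  | inr (inl c) => Xm c.1 c.2 | inr (inr c) => Ym c.1 c.2 end).
rewrite decT_setblockE (BS hX (leqnn b)) /= !mxOf_surj.
by split => //; split.
Qed.

Lemma dir_iff r k (V : 'I_r -> 'M[F]_k) (dvi : 'I_r -> nat) :
  (forall j, \rank (V j) = dvi j) ->
  (mxdirect (\sum_j V j) /\ (\sum_j V j == 1%:M)%MS) <->
  ((\sum_j dvi j)%N = k /\ (1%:M <= \sum_j V j)%MS).
Proof.
move=> hr.
have hs : (\sum_j \rank (V j) = \sum_j dvi j)%N by apply: eq_bigr => j _; rewrite hr.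
split.
  move=> [hd /andP [_ h1]]; split => //.
  have he : ((\sum_j V j)%MS == 1%:M)%MS by rewrite submx1 h1.
  by move: hd; rewrite mxdirectE /= -hs (eqmx_rank he) mxrank1 => /eqP.
move=> [hk h1].
have he : ((\sum_j V j)%MS == 1%:M)%MS by rewrite submx1 h1.
split; last exact: he.
by rewrite mxdirectE /= hs hk (eqmx_rank he) mxrank1.
Qed.

Lemma QFO_iff r (dv : 'I_r -> 'I_n -> nat) (f : rep) :
  QFO dv (encT (rep_coord f)) <-> Concl N dv f.
Proof.
rewrite /QFO /ExB /Concl.
have hfR : Below m (fun e => repOf (decT (T := coordT s t d) 0 e)).
  move=> e1 e2 H; congr repOf; apply: (@Below_decT F (coordT s t d) 0) => i hi.
  by apply: H; rewrite add0n in hi.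
have hfR' : Below (m + #|TW r|) (fun e => repOf (decT (T := coordT s t d) 0 e)).
  by apply: Below_mono hfR (leq_addr _ _).
have hWR : Below (m + #|TW r|) (fun e => WOf (decT (T := TW r) m e)).
  by move=> e1 e2 H; rewrite (@Below_decT F (TW r) m e1 e2 H).
have hWRj j : Below (m + #|TW r|) (fun e => WOf (decT (T := TW r) m e) j).
  by move=> e1 e2 H; rewrite (@Below_decT F (TW r) m e1 e2 H).
have hWRji j i : Below (m + #|TW r|) (fun e => WOf (decT (T := TW r) m e) j i).
  by move=> e1 e2 H; rewrite (@Below_decT F (TW r) m e1 e2 H).
have hf0 : repOf (decT (T := coordT s t d) 0 (encT (rep_coord f))) = f.
  by rewrite decT_encT repOf_coord.
have key : forall g : TW r -> F,
  ((forall j, indecFO (m + #|TW r|) (fun e => repOf (decT 0 e))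
                 (fun e => WOf (decT (T := TW r) m e) j) (setblock (encT (rep_coord f)) m (encT g))) /\
   (forall i, (\sum_j dv j i)%N = d i /\
       sumFO (m + #|TW r|) (fun e => WOf (decT (T := TW r) m e)) i (setblock (encT (rep_coord f)) m (encT g))) /\
   (forall j i, rankFO (m + #|TW r|) (fun e => WOf (decT (T := TW r) m e) j i) (dv j i)
                     (setblock (encT (rep_coord f)) m (encT g))))
  <-> ((forall j, indecomposable N f (WOf g j)) /\
       (forall i, (\sum_j dv j i)%N = d i /\ (1%:M <= \sum_j WOf g j i)%MS) /\
       (forall j i, \rank (WOf g j i) = dv j i)).
  move=> g.
  have E1 j : indecFO (m + #|TW r|) (fun e => repOf (decT 0 e))
                 (fun e => WOf (decT (T := TW r) m e) j) (setblock (encT (rep_coord f)) m (encT g))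
              <-> indecomposable N f (WOf g j).
    by rewrite (indecFO_iff _ hfR' (hWRj j)) (BS hfR (leqnn m)) hf0 decT_setblockE.
  have E2 i : sumFO (m + #|TW r|) (fun e => WOf (decT (T := TW r) m e)) i (setblock (encT (rep_coord f)) m (encT g))
              <-> (1%:M <= \sum_j WOf g j i)%MS.
    by rewrite (sumFO_iff _ _ hWR) decT_setblockE.
  have E3 j i : rankFO (m + #|TW r|) (fun e => WOf (decT (T := TW r) m e) j i) (dv j i)
                     (setblock (encT (rep_coord f)) m (encT g)) <-> \rank (WOf g j i) = dv j i.
    by rewrite (rankFO_iff _ _ (hWRji j i)) decT_setblockE.
  split.
    move=> [H1 [H2 H3]]; split; first by move=> j; apply/E1.
    split; last by move=> j i; apply/E3.
    by move=> i; have [h1 h2] := H2 i; split => //; apply/E2.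
  move=> [H1 [H2 H3]]; split; first by move=> j; apply/E1.
  split; last by move=> j i; apply/E3.
  by move=> i; have [h1 h2] := H2 i; split => //; apply/E2.
split.
  move=> [g /key [H1 [H2 H3]]]; exists (WOf g); split => //; split => // i.
  exact/(dir_iff (fun j => H3 j i)).
move=> [W [H1 [H2 H3]]].
exists (fun c : TW r => W c.1 (tag c.2) (tagged c.2).1 (tagged c.2).2); apply/key.
rewrite WOf_surj; split => //; split => // i.
exact/(dir_iff (fun j => H3 j i)).
Qed.
End FO.

Definition LT (Dt n : nat) : finType :=
  {r : 'I_Dt.+1 & {ffun ('I_r * 'I_n)%type -> 'I_Dt.+1}}.


End Helpers.
Import Helpers.

Theorem theorem2p4 (F : closedFieldType) (n : nat) (A : finType)
  (s t : A -> 'I_n) (noloop : forall a, s a != t a) (d : 'I_n -> nat)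
  (N : forall i : 'I_n, 'M[F]_(d i))
  (Nnil : forall i, exists k : nat, N i ^+ k = 0) :
  exists (U : rep F s t d -> Prop) (r : nat) (dv : 'I_r -> 'I_n -> nat),
    zopen_in (compatible N) U /\ zdense_in (compatible N) U /\
    (forall i, d i = (\sum_(j < r) dv j i)%N) /\
    forall f, U f ->
      exists W : 'I_r -> forall i : 'I_n, 'M[F]_(d i),
        (forall j, indecomposable N f (W j)) /\
        (forall i, mxdirect (\sum_(j < r) W j i) /\
                   (\sum_(j < r) W j i == 1%:M)%MS) /\
        (forall j i, \rank (W j i) = dv j i).
Proof.
pose Dt := (\sum_i d i)%N.
pose Q (l : LT Dt n) := @QFO F n A s t d N (tag l) (fun j i => val (tagged l (j, i))).
have hD : forall l, DefP (Q l) by move=> l; apply: QFO_DP.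
have cover : forall f : rep F s t d, compatible N f -> exists l, Q l (env f).
  move=> f cf.
  have [r [dv [hr [hdv hC]]]] := Concl_exists N f.
  have hr' : (r < Dt.+1)%N by rewrite ltnS.
  pose dvf : {ffun ('I_r * 'I_n)%type -> 'I_Dt.+1} :=
    [ffun p => Ordinal (leq_ltn_trans (hdv p.1 p.2) (ltnSn Dt))].
  exists (@existT _ (fun r : 'I_Dt.+1 => {ffun ('I_r * 'I_n)%type -> 'I_Dt.+1}) (Ordinal hr') dvf).
  apply/QFO_iff => /=.
  have -> : (fun j i => val (dvf (j, i))) = dv.
    by apply: functional_extensionality => j; apply: functional_extensionality => i; rewrite ffunE.
  exact: hC.
have [l [U [hO [hDn [[f0 Uf0] hU]]]]] := final_open hD cover.
exists U, (tag l), (fun j i => val (tagged l (j, i))).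
split => //; split => //; split.
  exact: Concl_dim (proj1 (QFO_iff _ _ _) (hU f0 Uf0)).
by move=> f Uf; exact: (proj1 (QFO_iff _ _ _) (hU f Uf)).
Qed.
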